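(* Let $A$ be a noetherian ring and $M$ a finitely generated $A$-module. For each prime $\mathfrak{p}\subset A$, let an element $s(\mathfrak{p})\in M_{\mathfrak{p}}$ be given, such that whenever $\mathfrak{p}\subset \mathfrak{q}$ are primes we have $s(\mathfrak{p}) = 1\otimes s(\mathfrak{q}) \in A_{\mathfrak{p}}\otimes_{A_{\mathfrak{q}}} M_{\mathfrak{q}} = M_{\mathfrak{p}}$. Then there exists a unique $v\in M$ such that $i_{\mathfrak{p}}(v) = s(\mathfrak{p})$ for each prime $\mathfrak{p}$, where $i_{\mathfrak{p}}: M\to M_{\mathfrak{p}}$, $w\mapsto w/1$, is the localization map. *)

(* Defs.v *)
From mathcomp Require Import all_boot all_order all_algebra.
Set Implicit Arguments. Unset Strict Implicit. Unset Printing Implicit Defensive.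
Import GRing.Theory.
Local Open Scope ring_scope.

Section CommAlg.
Variable A : comPzRingType.

Definition is_ideal (I : A -> Prop) : Prop :=
  [/\ I 0, (forall x y, I x -> I y -> I (x + y)) & (forall a x, I x -> I (a * x))].

Definition is_prime (P : A -> Prop) : Prop :=
  [/\ is_ideal P, ~ P 1 & (forall x y, P (x * y) -> P x \/ P y)].

Definition noetherian : Prop :=
  forall I : nat -> (A -> Prop),
    (forall n, is_ideal (I n)) ->
    (forall n x, I n x -> I n.+1 x) ->
    exists N, forall n x, (N <= n)%N -> I n x -> I N x.

Variable M : lmodType A.

Definition fin_gen : Prop :=
  exists n (g : 'I_n -> M), forall m : M,
    exists c : 'I_n -> A, m = \sum_(i < n) c i *: g i.

(* Localization M_P at a prime P: an element of M_P is a fraction m / s,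
   represented by a pair (m, s) with s \notin P; two fractions are equal in
   M_P iff they are related by [loc_eq P]. *)
Definition locfrac := (M * A)%type.

Definition loc_eq (P : A -> Prop) (x y : locfrac) : Prop :=
  exists u, ~ P u /\ u *: (y.2 *: x.1 - x.2 *: y.1) = 0.

Definition loc_map (w : M) : locfrac := (w, 1).

End CommAlg.

(* Main.v *)
Require Import Defs.
From mathcomp Require Import all_boot all_order all_algebra.
From mathcomp Require Import ring.
From Stdlib Require Import Classical ClassicalEpsilon.
Set Implicit Arguments. Unset Strict Implicit. Unset Printing Implicit Defensive.
Local Open Scope ring_scope.
Import GRing.Theory.

Section Aux.
Variable A : comPzRingType.

Lemma prime_mul (P : A -> Prop) u v : is_prime P -> ~ P u -> ~ P v -> ~ P (u * v).
Proof. by case=> _ _ Hp Hu Hv /Hp []. Qed.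

Lemma prime_not1 (P : A -> Prop) : is_prime P -> ~ P 1.
Proof. by case. Qed.

Lemma max_exists (HA : noetherian A) (F : (A -> Prop) -> Prop) :
  (forall J, F J -> is_ideal J) -> (exists J, F J) ->
  exists J, F J /\ forall J', F J' -> (forall x, J x -> J' x) -> forall x, J' x -> J x.
Proof.
move=> Fid [J0 FJ0].
apply: NNPP => Hn.
have step : forall j : {J | F J}, exists j' : {J | F J},
    (forall x, proj1_sig j x -> proj1_sig j' x) /\ exists x, proj1_sig j' x /\ ~ proj1_sig j x.
  move=> [J FJ] /=.
  apply: NNPP => Hn2; apply: Hn; exists J; split => // J' FJ' sub x J'x.
  apply: NNPP => nJx; apply: Hn2; exists (exist _ J' FJ') => /=; split=> //; by exists x.
pose f (j : {J | F J}) := proj1_sig (constructive_indefinite_description _ (step j)).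
pose ch := fix ch (n : nat) : {J | F J} := if n is n'.+1 then f (ch n') else exist _ J0 FJ0.
have Hinc : forall n x, proj1_sig (ch n) x -> proj1_sig (ch n.+1) x.
  move=> n x; exact: (proj1 (proj2_sig (constructive_indefinite_description _ (step (ch n)))) x).
have [N HN] := HA (fun n => proj1_sig (ch n)) (fun n => Fid _ (proj2_sig (ch n))) Hinc.
have := proj2_sig (constructive_indefinite_description _ (step (ch N))).
case=> _ [x [Hx nHx]]. apply: nHx. exact: (HN N.+1 x (leqnSn N) Hx).
Qed.


Lemma ideal_colon (K : A -> Prop) x : is_ideal K -> is_ideal (fun z => K (z * x)).
Proof.
case=> K0 KD KM; split; first by rewrite mul0r.
- by move=> y z Hy Hz; rewrite mulrDl; apply: KD.
- by move=> a y Hy; rewrite -mulrA; apply: KM.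
Qed.

Lemma assoc_prime (HA : noetherian A) (K : A -> Prop) :
  is_ideal K -> ~ K 1 -> exists x, ~ K x /\ is_prime (fun z => K (z * x)).
Proof.
move=> HK nK1.
pose F := fun J : A -> Prop => exists x, ~ K x /\ forall z, J z <-> K (z * x).
have [J [[x [nKx HJ]] Jmax]] : exists J, F J /\ forall J', F J' -> (forall x, J x -> J' x) -> forall x, J' x -> J x.
  apply: max_exists => //.
    move=> J [x [_ HJ]].
    have := ideal_colon x HK; case=> H0 HD HM; split.
    - by apply/HJ.
    - by move=> y z /HJ Hy /HJ Hz; apply/HJ; apply: HD.
    - by move=> a y /HJ Hy; apply/HJ; apply: HM.
  by exists (fun z => K (z * 1)), 1; split => // z.
exists x; split => //; split; first exact: (ideal_colon x HK).
- by rewrite mul1r.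
- move=> y z Hyz; apply: NNPP => /not_or_and [nyx nzx]; apply: nzx.
  have FJ' : F (fun w => K (w * (y * x))) by exists (y * x).
  have sub : forall w, J w -> K (w * (y * x)).
    move=> w /HJ Hw; rewrite mulrA (mulrC w) -mulrA.
    by case: HK => _ _ HM; apply: HM.
  apply/HJ; apply: (Jmax _ FJ' sub).
  by rewrite mulrA (mulrC z).
Qed.

Fixpoint ispan (L : seq A) (a : A) : Prop :=
  if L is b :: L' then exists c a', ispan L' a' /\ a = c * b + a' else a = 0.

Lemma ispan_ideal L : is_ideal (ispan L).
Proof.
elim: L => [|b L [H0 HD HM]] /=.
  split => //; first by move=> x y -> ->; rewrite addr0.
  by move=> a x ->; rewrite mulr0.
split.
- by exists 0, 0; rewrite mul0r addr0.
- move=> x y [c [a' [H1 ->]]] [c' [a'' [H2 ->]]].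
  exists (c + c'), (a' + a''); split; first exact: HD.
  by rewrite mulrDl addrACA.
- move=> a x [c [a' [H1 ->]]]; exists (a * c), (a * a'); split; first exact: HM.
  by rewrite mulrDr mulrA.
Qed.

Lemma ideal_fg (HA : noetherian A) (I : A -> Prop) : is_ideal I ->
  exists L : seq A, (forall b, b \in L -> I b) /\ forall a, I a -> ispan L a.
Proof.
move=> HI.
pose F := fun J : A -> Prop => exists L : seq A, (forall b, b \in L -> I b) /\ forall z, J z <-> ispan L z.
have [J [[L [LI HJ]] Jmax]] : exists J, F J /\ forall J', F J' -> (forall x, J x -> J' x) -> forall x, J' x -> J x.
  apply: max_exists => //.
    move=> J [L [_ HJ]]; have := ispan_ideal L; case=> H0 HD HM; split.
    - by apply/HJ.
    - by move=> y z /HJ Hy /HJ Hz; apply/HJ; apply: HD.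
    - by move=> a y /HJ Hy; apply/HJ; apply: HM.
  by exists (ispan [::]), [::].
exists L; split => // a Ia.
apply/HJ; apply: (Jmax (ispan (a :: L))).
- exists (a :: L); split => // b; rewrite inE => /orP [/eqP -> //|]; exact: LI.
- move=> z /HJ Hz /=; exists 0, z; split => //; by rewrite mul0r add0r.
- by exists 1, 0; split; [case: (ispan_ideal L) | rewrite mul1r addr0].
Qed.

End Aux.

Section Mod.
Variable A : comPzRingType.
Variable M : lmodType A.

Fixpoint span (s : seq M) (x : M) : Prop :=
  if s is g :: s' then exists a y, span s' y /\ x = a *: g + y else x = 0.

Definition submod (N : M -> Prop) :=
  [/\ N 0, forall x y, N x -> N y -> N (x + y) & forall a x, N x -> N (a *: x)].

Lemma span_submod s : submod (span s).
Proof.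
elim: s => [|g s [H0 HD HM]] /=.
  split => //; first by move=> x y -> ->; rewrite addr0.
  by move=> a x ->; rewrite scaler0.
split.
- by exists 0, 0; rewrite scale0r addr0.
- move=> x y [c [a' [H1 ->]]] [c' [a'' [H2 ->]]].
  exists (c + c'), (a' + a''); split; first exact: HD.
  by rewrite scalerDl addrACA.
- move=> a x [c [a' [H1 ->]]]; exists (a * c), (a *: a'); split; first exact: HM.
  by rewrite scalerDr scalerA.
Qed.

Lemma submodB N x y : submod N -> N x -> N y -> N (x - y).
Proof.
case=> _ HD HM Hx Hy; apply: HD => //; rewrite -scaleN1r; exact: HM.
Qed.

Lemma kill (HA : noetherian A) (q : A -> Prop) : is_prime q ->
  forall s N, submod N -> (forall y, N y -> span s y) ->
  (forall y, N y -> exists w, ~ q w /\ w *: y = 0) ->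
  exists c, ~ q c /\ forall y, N y -> c *: y = 0.
Proof.
move=> Hq; elim=> [|g s IH] N HN Hs Hk.
  exists 1; split; first exact: prime_not1.
  by move=> y /Hs /= ->; rewrite scaler0.
have HN' : submod (fun y => N y /\ span s y).
  case: HN => N0 ND NM; case: (span_submod s) => S0 SD SM; split.
  - by split.
  - by move=> x y [? ?] [? ?]; split; [apply: ND|apply: SD].
  - by move=> a x [? ?]; split; [apply: NM|apply: SM].
have [c1 [nc1 Hc1]] := IH _ HN' (fun y H => proj2 H) (fun y H => Hk y (proj1 H)).
pose I := fun a => exists y, N y /\ span s (y - a *: g).
have HI : is_ideal I.
  case: HN => N0 ND NM; case: (span_submod s) => S0 SD SM; split.
  - by exists 0; split => //; rewrite scale0r subr0.
  - move=> a b [y [Ny Sy]] [z [Nz Sz]]; exists (y + z); split; first exact: ND.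
    have -> : y + z - (a + b) *: g = (y - a *: g) + (z - b *: g).
      by rewrite scalerDl opprD addrACA.
    exact: SD.
  - move=> a b [y [Ny Sy]]; exists (a *: y); split; first exact: NM.
    have -> : a *: y - (a * b) *: g = a *: (y - b *: g) by rewrite scalerBr scalerA.
    exact: SM.
have [L [LI LS]] := ideal_fg HA HI.
have : exists W, ~ q W /\ forall a, ispan L a ->
    exists y, [/\ N y, span s (y - a *: g) & W *: y = 0].
  clear LS; elim: L LI => [|b L IHL] LI.
    exists 1; split; first exact: prime_not1.
    move=> a /= ->; exists 0; rewrite scale0r subr0 scaler0.
    by case: HN; case: (span_submod s).
  have [W' [nW' HW']] := IHL (fun x Hx => LI x (@mem_behead _ (b :: L) x Hx)).
  have [y0 [Ny0 Sy0]] := LI b (mem_head b L).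
  have [w0 [nw0 Hw0]] := Hk _ Ny0.
  exists (w0 * W'); split; first exact: prime_mul.
  move=> a [c [a' [Ha' ->]]].
  have [y' [Ny' Sy' Wy']] := HW' _ Ha'.
  case: HN => N0 ND NM; case: (span_submod s) => S0 SD SM.
  exists (c *: y0 + y'); split.
  - by apply: ND => //; apply: NM.
  - have -> : c *: y0 + y' - (c * b + a') *: g = c *: (y0 - b *: g) + (y' - a' *: g).
      by rewrite scalerDl opprD addrACA scalerBr scalerA.
    by apply: SD => //; apply: SM.
  - have E1 : (w0 * W') *: y0 = 0 by rewrite mulrC -scalerA Hw0 scaler0.
    have E2 : (w0 * W') *: y' = 0 by rewrite -scalerA Wy' scaler0.
    by rewrite scalerDr E2 scalerA mulrC -scalerA E1 scaler0 addr0.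
case=> W [nW HW].
exists (c1 * W); split; first exact: prime_mul.
move=> y Ny; have := Hs _ Ny => /= [[a [y' [Sy' Ey]]]].
have Ia : I a by exists y; split => //; rewrite Ey addrC addKr.
have [y1 [Ny1 Sy1 Wy1]] := HW a (LS a Ia).
have Hd : N (y - y1) /\ span s (y - y1).
  split; first exact: submodB.
  have -> : y - y1 = y' - (y1 - a *: g) by rewrite Ey opprB addrA (addrC y').
  exact: submodB (span_submod s) Sy' Sy1.
have := Hc1 _ Hd; rewrite scalerBr => /eqP; rewrite subr_eq0 => /eqP E.
by rewrite mulrC -scalerA E scalerA mulrC -scalerA Wy1 scaler0.
Qed.


Lemma sAC (a b : A) (v : M) : a *: (b *: v) = b *: (a *: v).
Proof. by rewrite !scalerA mulrC. Qed.

Lemma span_sum (I : Type) (r : seq I) (c : I -> A) (g : I -> M) :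
  span [seq g i | i <- r] (\sum_(i <- r) c i *: g i).
Proof.
elim: r => [|i r IH] /=; first by rewrite big_nil.
by rewrite big_cons; exists (c i), (\sum_(j <- r) c j *: g j).
Qed.

End Mod.

Theorem lemma7 (A : comPzRingType) (M : lmodType A)
  (HA : noetherian A) (HM : fin_gen M)
  (s : (A -> Prop) -> locfrac M)
  (Hs : forall P, is_prime P -> ~ P (s P).2)
  (Hcompat : forall P Q : A -> Prop, is_prime P -> is_prime Q ->
      (forall x, P x -> Q x) -> loc_eq P (s P) (s Q)) :
  exists v : M,
    (forall P, is_prime P -> loc_eq P (loc_map v) (s P)) /\
    (forall w : M, (forall P, is_prime P -> loc_eq P (loc_map w) (s P)) -> w = v).
Proof.
have [n [g Hg]] := HM.
pose L := [seq g i | i <- index_enum 'I_n].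
have HL : forall y, span L y.
  by move=> y; have [c ->] := Hg y; exact: span_sum.
pose G := fun (r : A -> Prop) (a : A) (m : M) =>
  exists u, ~ r u /\ u *: (a *: (s r).1 - (s r).2 *: m) = 0.
pose K := fun a => exists m, forall r, is_prime r -> G r a m.
have HK : is_ideal K.
  split.
  - exists 0 => r Hr; exists 1; split; first exact: prime_not1.
    by rewrite scale0r scaler0 subr0 scaler0.
  - move=> a b [m Hm] [m' Hm']; exists (m + m') => r Hr.
    have [u [nu Hu]] := Hm r Hr; have [u' [nu' Hu']] := Hm' r Hr.
    exists (u * u'); split; first exact: prime_mul.
    rewrite scalerDl (scalerDr (s r).2) opprD addrACA scalerDr -scalerA (sAC u) Hu scaler0 add0r.
    by rewrite -scalerA Hu' !scaler0.
  - move=> a b [m Hm]; exists (a *: m) => r Hr; have [u [nu Hu]] := Hm r Hr.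
    exists u; split => //.
    by rewrite -scalerA (sAC (s r).2) -scalerBr sAC Hu scaler0.
have K1 : K 1.
  apply: NNPP => nK1.
  have [x [nKx Hq]] := assoc_prime HA HK nK1.
  move: Hq; set q := (fun z => K (z * x)) => Hq.
  have nt : ~ q (s q).2 := Hs q Hq.
  pose N := fun y : M => exists w, ~ q w /\ w *: y = 0.
  have HN : submod N.
    split.
    - by exists 1; split; [exact: prime_not1 | rewrite scaler0].
    - move=> y z [w [nw Hw]] [w' [nw' Hw']]; exists (w * w'); split; first exact: prime_mul.
      by rewrite scalerDr -scalerA (sAC w) Hw scaler0 add0r -scalerA Hw' !scaler0.
    - move=> a y [w [nw Hw]]; exists w; split => //.
      by rewrite sAC Hw scaler0.
  have [c [nc Hc]] := kill HA Hq HN (fun y _ => HL y) (fun y H => H).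
  have Kxct : K ((c * (s q).2) * x).
    exists (x *: (c *: (s q).1)) => r Hr.
    have [sub|nsub] := classic (forall z, q z -> r z).
    + have [u [nu Hu]] := Hcompat q r Hq Hr sub.
      have Nd : N ((s r).2 *: (s q).1 - (s q).2 *: (s r).1) by exists u.
      have E := Hc _ Nd.
      exists 1; split; first exact: prime_not1.
      rewrite scale1r.
      have -> : (c * (s q).2 * x) *: (s r).1 = x *: (c *: ((s q).2 *: (s r).1)).
        by rewrite !scalerA; congr (_ *: _); ring.
      rewrite (sAC (s r).2) (sAC (s r).2) -!scalerBr -opprB scalerN.
      by rewrite E oppr0 scaler0.
    + have [z Hz] := not_all_ex_not _ _ nsub.
      have [qz nrz] := imply_to_and _ _ Hz.
      have [m' Hm'] : K (z * x) := qz.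
      have [w [nw Hw]] := Hm' r Hr.
      have [w' [nw' Hw']] := Hm' q Hq.
      have E : c *: ((z * x) *: (s q).1 - (s q).2 *: m') = 0 by apply: Hc; exists w'.
      exists (w * z); split; first exact: prime_mul.
      move: Hw E; rewrite !scalerBr !scalerA => /eqP; rewrite subr_eq0 => /eqP Hw /eqP.
      rewrite subr_eq0 => /eqP E; idtac.
      apply/eqP; rewrite subr_eq0; apply/eqP.       transitivity ((c * (s q).2) *: ((w * (z * x)) *: (s r).1)).
        by rewrite scalerA; congr (_ *: _); ring.
      rewrite Hw !scalerA.
      transitivity ((w * (s r).2) *: ((c * (z * x)) *: (s q).1)).
        by rewrite E !scalerA; congr (_ *: _); ring.
      by rewrite scalerA; congr (_ *: _); ring.
  have : q (c * (s q).2) := Kxct.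
  by case: Hq => _ _ Hp; case/Hp.
have [v Hv] := K1.
exists v; split.
- move=> P HP; have [u [nu Hu]] := Hv P HP; exists u; split => //=.
  by move: Hu; rewrite !scale1r => Hu; rewrite -opprB scalerN Hu oppr0.
- move=> w Hw.
  have loc0 : forall r, is_prime r -> exists u, ~ r u /\ u *: (w - v) = 0.
    move=> r Hr; have [u1 [nu1 Hu1]] := Hw r Hr; have [u2 [nu2 Hu2]] := Hv r Hr.
    exists (u1 * u2 * (s r).2); split; first exact: (prime_mul Hr (prime_mul Hr nu1 nu2) (Hs r Hr)).
    move: Hu1 Hu2; rewrite /loc_map /= !scale1r !scalerBr => /eqP; rewrite subr_eq0 => /eqP H1.
    move=> /eqP; rewrite subr_eq0 => /eqP H2.
    apply/eqP; rewrite subr_eq0; apply/eqP.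
    transitivity (u2 *: (u1 *: ((s r).2 *: w))); first by rewrite !scalerA; congr (_ *: _); ring.
    rewrite H1 (sAC u2 u1) H2.
    by rewrite !scalerA; congr (_ *: _); ring.
  pose I := fun a : A => a *: (w - v) = 0.
  have HI : is_ideal I.
    split; rewrite /I.
    - by rewrite scale0r.
    - by move=> a b Ha Hb; rewrite scalerDl Ha Hb addr0.
    - by move=> a b Hb; rewrite -scalerA Hb scaler0.
  have I1 : I 1.
    apply: NNPP => nI1.
    have [x [nIx Hq]] := assoc_prime HA HI nI1.
    have [u [nu Hu]] := loc0 _ Hq.
    by apply: nu; rewrite /I mulrC -scalerA Hu scaler0.
  by move: I1; rewrite /I scale1r => /eqP; rewrite subr_eq0 => /eqP.
Qed.
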